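(* For every positive integer $n$, the Chinese monoid $\mathsf{Ch}_n$ satisfies every semigroup identity that is satisfied by the monoid $\mathcal U_2(\mathbb T)$ of $2\times 2$ upper triangular tropical matrices.
   Context: The Chinese monoid of rank $n$ is the monoid $\mathsf{Ch}_n=\langle a_1,\dots,a_n\rangle$ presented by the relations $a_ja_ka_i=a_ka_ja_i=a_ka_ia_j$ for all $1\le i\le j\le k\le n$. The tropical semiring is $\mathbb T=\mathbb R\cup\{-\infty\}$ with addition $\max$ and multiplication $+$; $\mathcal U_2(\mathbb T)$ is the monoid of $2\times2$ matrices over $\mathbb T$ with lower-left entry $-\infty$, under the max-plus matrix product. A semigroup identity is a pair $u=v$ of nonempty words over an alphabet $\mathcal A$; a semigroup $\mathcal S$ satisfies it if $\phi(u)=\phi(v)$ for every semigroup homomorphism $\phi:\mathcal A^+\to\mathcal S$. *)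

(* Defs.v *)
From mathcomp Require Import all_boot.
From Stdlib Require Import Reals.

Set Implicit Arguments.
Unset Strict Implicit.
Unset Printing Implicit Defensive.

(* None represents -oo. *)
Definition trop := option R.

Definition tadd (x y : trop) : trop :=
  match x, y with
  | None, _ => y
  | _, None => x
  | Some a, Some b => Some (Rmax a b)
  end.

Definition tmul (x y : trop) : trop :=
  match x, y with
  | Some a, Some b => Some (Rplus a b)
  | _, _ => None
  end.

Definition tzero : trop := None.
Definition tone : trop := Some 0%R.

Record mat2 := Mat2 { m11 : trop; m12 : trop; m21 : trop; m22 : trop }.

Definition mat2_mul (A B : mat2) : mat2 :=
  Mat2 (tadd (tmul (m11 A) (m11 B)) (tmul (m12 A) (m21 B)))
       (tadd (tmul (m11 A) (m12 B)) (tmul (m12 A) (m22 B)))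
       (tadd (tmul (m21 A) (m11 B)) (tmul (m22 A) (m21 B)))
       (tadd (tmul (m21 A) (m12 B)) (tmul (m22 A) (m22 B))).

Definition mat2_one : mat2 := Mat2 tone tzero tzero tone.

Definition is_U2 (A : mat2) : Prop := m21 A = None.

Definition mat2_eval (X : Type) (phi : X -> mat2) (w : seq X) : mat2 :=
  foldr (fun a acc => mat2_mul (phi a) acc) mat2_one w.

Definition U2T_satisfies (X : Type) (u v : seq X) : Prop :=
  forall phi : X -> mat2, (forall x, is_U2 (phi x)) ->
    mat2_eval phi u = mat2_eval phi v.

(* Generators a_1..a_n are the ordinals of 'I_n (0-based, same order).
   Ch_n = free monoid seq 'I_n modulo the congruence generated by
   a_j a_k a_i = a_k a_j a_i = a_k a_i a_j  for i <= j <= k. *)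
Inductive ch_cong (n : nat) : seq 'I_n -> seq 'I_n -> Prop :=
  | ch_rel1 (p q : seq 'I_n) (i j k : 'I_n) :
      (i <= j <= k)%N ->
      ch_cong (p ++ [:: j; k; i] ++ q) (p ++ [:: k; j; i] ++ q)
  | ch_rel2 (p q : seq 'I_n) (i j k : 'I_n) :
      (i <= j <= k)%N ->
      ch_cong (p ++ [:: k; j; i] ++ q) (p ++ [:: k; i; j] ++ q)
  | ch_refl (w : seq 'I_n) : ch_cong w w
  | ch_sym (w1 w2 : seq 'I_n) : ch_cong w1 w2 -> ch_cong w2 w1
  | ch_trans (w1 w2 w3 : seq 'I_n) :
      ch_cong w1 w2 -> ch_cong w2 w3 -> ch_cong w1 w3.

(* Ch_n satisfies u = v: for every assignment of elements of Ch_n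
   (given by representative words) to letters, the images of u and v
   are equal in Ch_n. *)
Definition Ch_satisfies (n : nat) (X : Type) (u v : seq X) : Prop :=
  forall phi : X -> seq 'I_n,
    ch_cong (flatten (map phi u)) (flatten (map phi v)).

(* Main.v *)
From Stdlib Require Import ZArith Lia Lra.
From mathcomp Require Import zify.
Require Import Defs.
From mathcomp Require Import all_boot.
From Stdlib Require Import Reals.

Set Implicit Arguments.
Unset Strict Implicit.
Unset Printing Implicit Defensive.

Lemma ctx_eq (T : Type) (p p0 t q0 q : seq T) :
  p ++ (p0 ++ t ++ q0) ++ q = (p ++ p0) ++ t ++ (q0 ++ q).
Proof. by rewrite !catA. Qed.

Lemma ch_ctx n (a b : seq 'I_n) : ch_cong a b ->
  forall p q, ch_cong (p ++ a ++ q) (p ++ b ++ q).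
Proof.
elim => {a b}.
- by move=> p0 q0 i j k H p q; rewrite !ctx_eq; apply: ch_rel1.
- by move=> p0 q0 i j k H p q; rewrite !ctx_eq; apply: ch_rel2.
- by move=> w p q; apply: ch_refl.
- by move=> w1 w2 _ IH p q; apply: ch_sym.
- by move=> w1 w2 w3 _ IH1 _ IH2 p q; apply: ch_trans (IH1 p q) (IH2 p q).
Qed.

Lemma ch_catl n (p a b : seq 'I_n) : ch_cong a b -> ch_cong (p ++ a) (p ++ b).
Proof. by move=> H; have := ch_ctx H p [::]; rewrite !cats0. Qed.

Lemma ch_catr n (q a b : seq 'I_n) : ch_cong a b -> ch_cong (a ++ q) (b ++ q).
Proof. by move=> H; have := ch_ctx H [::] q. Qed.

Lemma ch_cat n (a b c d : seq 'I_n) : ch_cong a b -> ch_cong c d -> ch_cong (a ++ c) (b ++ d).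
Proof. by move=> H1 H2; apply: ch_trans (ch_catr c H1) (ch_catl b H2). Qed.

Lemma r1 n (i j k : 'I_n) : (i <= j <= k)%nat -> ch_cong [:: j; k; i] [:: k; j; i].
Proof. by move=> H; exact: (ch_rel1 [::] [::] H). Qed.
Lemma r2 n (i j k : 'I_n) : (i <= j <= k)%nat -> ch_cong [:: k; j; i] [:: k; i; j].
Proof. by move=> H; exact: (ch_rel2 [::] [::] H). Qed.
Lemma rR2 n (i j k : 'I_n) : (i <= j <= k)%nat -> ch_cong [:: k; i; j] [:: j; k; i].
Proof. by move=> H; apply: ch_sym; apply: ch_trans (r1 H) (r2 H). Qed.

Lemma rswap n (m x y : 'I_n) : (x <= m)%nat -> (y <= m)%nat -> ch_cong [:: m; x; y] [:: m; y; x].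
Proof.
move=> hx hy; case: (leqP x y) => h.
- by apply: ch_sym; apply: r2; rewrite h hy.
- by apply: r2; rewrite (ltnW h) hx.
Qed.

Fixpoint pairs n (m : 'I_n) (L : seq 'I_n) : seq 'I_n :=
  match L with [::] => [::] | e :: L' => m :: e :: pairs m L' end.
Lemma pairs_cons n (m e : 'I_n) L : pairs m (e :: L) = [:: m; e] ++ pairs m L.
Proof. by []. Qed.
Definition rowword n (m : 'I_n) L a := pairs m L ++ nseq a m.
Fixpoint ins n (x : 'I_n) (L : seq 'I_n) := match L with
  | [::] => [:: x]
  | e :: L' => if (e <= x)%nat then x :: e :: L' else e :: ins x L' end.
Fixpoint sortd n (L : seq 'I_n) := match L with
  | [::] => [::] | x :: L' => ins x (sortd L') end.

Lemma pair_swap n (m i j : 'I_n) : (i <= m)%nat -> (j <= m)%nat ->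
  ch_cong ([:: m; i] ++ [:: m; j]) ([:: m; j] ++ [:: m; i]).
Proof.
move=> hi hj.
have e1 : forall x : 'I_n, (x <= m)%nat -> ch_cong [:: m; x; m] [:: m; m; x].
  by move=> x hx; apply: ch_sym; apply: r2; rewrite hx leqnn.
apply: (@ch_trans _ _ ([:: m] ++ [:: m; i; j])).
  by have := ch_catr [:: j] (e1 i hi).
apply: (@ch_trans _ _ ([:: m] ++ [:: m; j; i])).
  by apply: ch_catl; apply: rswap.
by have := ch_catr [:: i] (ch_sym (e1 j hj)).
Qed.

Lemma pairs_comm n (m x : 'I_n) L : (x <= m)%nat -> all (fun e : 'I_n => e <= m)%nat L ->
  ch_cong (pairs m L ++ [:: m; x]) ([:: m; x] ++ pairs m L).
Proof.
move=> hx; elim: L => [|e L IH]; first by move=> _; rewrite cats0; apply: ch_refl.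
move=> /andP [he hL]; rewrite !pairs_cons.
apply: (@ch_trans _ _ ([:: m; e] ++ [:: m; x] ++ pairs m L)).
  by rewrite -catA; apply: ch_catl; apply: IH.
by rewrite !catA; apply: ch_catr; apply: pair_swap.
Qed.

Lemma pairs_ins n (m x : 'I_n) L : (x <= m)%nat -> all (fun e : 'I_n => e <= m)%nat L ->
  ch_cong (pairs m (x :: L)) (pairs m (ins x L)).
Proof.
move=> hx; elim: L => [|e L IH]; first by move=> _; apply: ch_refl.
move=> /andP [he hL]; rewrite [ins _ _]/=; case: ifP => _; first by apply: ch_refl.
rewrite !pairs_cons.
apply: (@ch_trans _ _ ([:: m; e] ++ [:: m; x] ++ pairs m L)).
  by rewrite !catA; apply: ch_catr; apply: pair_swap.
by apply: ch_catl; apply: IH.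
Qed.

Lemma all_ins n (P : pred 'I_n) x L : all P (ins x L) = P x && all P L.
Proof.
elim: L => [|e L IH] //=; case: ifP => _ //=; rewrite IH.
by case: (P x); case: (P e).
Qed.

Lemma all_sortd n (P : pred 'I_n) L : all P (sortd L) = all P L.
Proof. by elim: L => [|x L IH] //=; rewrite all_ins IH. Qed.

Lemma pairs_sortd n (m : 'I_n) L : all (fun e : 'I_n => e <= m)%nat L ->
  ch_cong (pairs m L) (pairs m (sortd L)).
Proof.
elim: L => [|x L IH]; first by move=> _; apply: ch_refl.
move=> /andP [hx hL].
apply: (@ch_trans _ _ ([:: m; x] ++ pairs m (sortd L))).
  by rewrite pairs_cons; apply: ch_catl; apply: IH.
by apply: (pairs_ins hx); rewrite all_sortd.
Qed.

Definition geo n (x y : 'I_n) : bool := (y <= x)%nat.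

Lemma path_ins n (x e : 'I_n) L : geo e x -> path (@geo n) e L -> path (@geo n) e (ins x L).
Proof.
elim: L e => [|f L IH] e /=; first by rewrite andbT.
move=> hex /andP [hef hp]; case: ifP => hfx /=.
  by rewrite hex /geo hfx.
by rewrite hef; apply: IH => //; rewrite /geo ltnW // ltnNge hfx.
Qed.

Lemma sorted_ins n (x : 'I_n) L : sorted (@geo n) L -> sorted (@geo n) (ins x L).
Proof.
case: L => [|e L] //= hp; case: ifP => hex /=.
  by rewrite /geo hex.
by apply: path_ins => //; rewrite /geo ltnW // ltnNge hex.
Qed.

Lemma sorted_sortd n (L : seq 'I_n) : sorted (@geo n) (sortd L).
Proof. by elim: L => [|x L IH] //=; apply: sorted_ins. Qed.

Lemma nseq_r (T : Type) (a : nat) (m : T) : nseq a m ++ [:: m] = m :: nseq a m.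
Proof. by elim: a => //= a ->. Qed.

Lemma mpow_pair n (m x : 'I_n) k : (x <= m)%nat ->
  ch_cong (nseq k m ++ [:: m; x]) ([:: m; x] ++ nseq k m).
Proof.
move=> hx; elim: k => [|k IH]; first by rewrite cats0; apply: ch_refl.
apply: (@ch_trans _ _ ([:: m] ++ [:: m; x] ++ nseq k m)).
  by apply: (ch_catl [:: m] IH).
rewrite catA.
have -> : [:: m; x] ++ nseq k.+1 m = [:: m; x; m] ++ nseq k m by [].
by apply: ch_catr; apply: r2; rewrite hx leqnn.
Qed.

Lemma all_ltW n (m : 'I_n) L : all (fun e : 'I_n => e < m)%nat L -> all (fun e : 'I_n => e <= m)%nat L.
Proof. by apply: sub_all => e /ltnW. Qed.

Lemma emission n (m x : 'I_n) L : (x < m)%nat -> all (fun e : 'I_n => e < m)%nat L ->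
  exists (y : 'I_n) (L' : seq 'I_n), (y < m)%nat /\ all (fun e : 'I_n => e < m)%nat L' /\
    ch_cong (pairs m L ++ [:: x]) ([:: y] ++ pairs m L').
Proof.
move=> hx; elim: L => [|e L IH].
  by move=> _; exists x, [::]; split => //; split => //; apply: ch_refl.
move=> /andP [he hL]; have [y [L' [hy [hL' H]]]] := IH hL.
have H1 : ch_cong (pairs m (e :: L) ++ [:: x]) ([:: m; e; y] ++ pairs m L').
  by rewrite pairs_cons -catA; apply: (ch_catl [:: m; e] H).
case: (leqP e y) => hey.
- exists y, (e :: L'); split => //; split; first by rewrite /= he hL'.
  apply: ch_trans H1 _; rewrite pairs_cons catA; apply: ch_catr.
  by rewrite /=; apply: rR2; rewrite hey ltnW.
- exists e, (y :: L'); split => //; split; first by rewrite /= hy hL'.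
  apply: ch_trans H1 _; rewrite pairs_cons catA; apply: ch_catr.
  have h1 : (y <= e <= m)%nat by rewrite (ltnW hey) ltnW.
  by rewrite /=; apply: ch_trans (r2 h1) (rR2 h1).
Qed.

Lemma row_step n (m x : 'I_n) L a : (x <= m)%nat -> all (fun e : 'I_n => e < m)%nat L ->
  exists (ys : seq 'I_n) (L' : seq 'I_n) (a' : nat), all (fun e : 'I_n => e < m)%nat ys /\ all (fun e : 'I_n => e < m)%nat L' /\
    ch_cong (rowword m L a ++ [:: x]) (ys ++ rowword m L' a').
Proof.
move=> hx hL; case: (eqVneq x m) => [->|hxm].
  exists [::], L, a.+1; split => //; split => //.
  by rewrite /rowword -catA nseq_r; apply: ch_refl.
have hxm' : (x < m)%nat by rewrite ltn_neqAle hx andbT; apply/eqP => /val_inj; apply/eqP.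
case: a => [|a].
- have [y [L' [hy [hL' H]]]] := emission hxm' hL.
  exists [:: y], L', 0; split; first by rewrite /= hy.
  by split => //; rewrite /rowword !cats0.
- exists [::], (x :: L), a; split => //; split; first by rewrite /= hxm' hL.
  rewrite /rowword -catA.
  have -> : nseq a.+1 m ++ [:: x] = nseq a m ++ [:: m; x].
    have e1 : nseq a.+1 m = nseq a m ++ [:: m] by rewrite nseq_r.
    by rewrite e1 -catA.
  apply: (@ch_trans _ _ (pairs m L ++ [:: m; x] ++ nseq a m)).
    by apply: ch_catl; apply: mpow_pair.
  rewrite catA pairs_cons cat0s; apply: ch_catr.
  by apply: pairs_comm => //; apply: all_ltW.
Qed.

Lemma split_top n (m : 'I_n) w : all (fun e : 'I_n => e <= m)%nat w ->
  exists (u : seq 'I_n) (L : seq 'I_n) (a : nat), all (fun e : 'I_n => e < m)%nat u /\ all (fun e : 'I_n => e < m)%nat L /\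
    ch_cong w (u ++ rowword m L a).
Proof.
elim/last_ind: w => [|w x IH].
  by move=> _; exists [::], [::], 0; split => //; split => //; apply: ch_refl.
rewrite all_rcons => /andP [hx hw].
have [u [L [a [hu [hL H]]]]] := IH hw.
have [ys [L' [a' [hys [hL' H']]]]] := row_step a hx hL.
exists (u ++ ys), L', a'; split; first by rewrite all_cat hu hys.
split => //; rewrite -cats1.
apply: ch_trans (ch_catr [:: x] H) _.
by rewrite -catA -catA; apply: ch_catl.
Qed.

Inductive stair n : nat -> seq 'I_n -> Prop :=
| st0 : stair 0 [::]
| stS b u (m : 'I_n) L a : nat_of_ord m = b -> stair b u -> sorted (@geo n) L ->
    all (fun e : 'I_n => e < b)%nat L -> stair b.+1 (u ++ rowword m L a).

Lemma exist_stair n b : (b <= n)%nat -> forall w : seq 'I_n, all (fun x : 'I_n => x < b)%nat w ->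
  exists w', stair b w' /\ ch_cong w w'.
Proof.
elim: b => [|b IH] hb w hw.
  case: w hw => [|x w] //=; first by move=> _; exists [::]; split; [apply: st0 | apply: ch_refl].
set m : 'I_n := Ordinal hb.
have hw' : all (fun e : 'I_n => e <= m)%nat w by [].
have [u [L [a [hu [hL H]]]]] := split_top hw'.
have [u' [su hu']] := IH (ltnW hb) u hu.
exists (u' ++ rowword m (sortd L) a); split.
  apply: stS => //; first by apply: sorted_sortd.
  by rewrite all_sortd.
apply: ch_trans H _; apply: ch_cat => //.
rewrite /rowword; apply: ch_catr; apply: pairs_sortd; exact: all_ltW.
Qed.

Definition fz (p q y : nat) : Z :=
  if (q <= y)%nat then 1%Z else if (y < p)%nat then (-1)%Z else 0%Z.

Fixpoint Sz n p q (w : seq 'I_n) : Z :=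
  match w with [::] => 0%Z | y :: w' => (fz p q y + Sz p q w')%Z end.
Fixpoint Dz n p q (w : seq 'I_n) : Z :=
  match w with [::] => 0%Z | y :: w' => Z.max (Dz p q w') (fz p q y + Sz p q w')%Z end.

Lemma fz_range p q y : (-1 <= fz p q y <= 1)%Z.
Proof. rewrite /fz; case: ifP => _; last case: ifP => _; lia. Qed.

Lemma fz_mono p q y1 y2 : (y1 <= y2)%nat -> (fz p q y1 <= fz p q y2)%Z.
Proof.
move=> h; rewrite /fz.
case: (leqP q y2) => h2; case: (leqP q y1) => h1;
case: (ltnP y1 p) => h3; case: (ltnP y2 p) => h4; lia.
Qed.

Lemma Sz_cons n p q (y : 'I_n) w : Sz p q (y :: w) = (fz p q y + Sz p q w)%Z.
Proof. by []. Qed.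

Lemma Sz_cat n p q (s t : seq 'I_n) : Sz p q (s ++ t) = (Sz p q s + Sz p q t)%Z.
Proof. elim: s => [|x s IH] /=; lia. Qed.

Lemma Sz_le_Dz n p q (s : seq 'I_n) : (Sz p q s <= Dz p q s)%Z.
Proof. case: s => [|x s] /=; lia. Qed.

Lemma Dz_ge0 n p q (s : seq 'I_n) : (0 <= Dz p q s)%Z.
Proof. elim: s => [|x s IH] /=; lia. Qed.

Lemma Dz_cat n p q (s t : seq 'I_n) :
  Dz p q (s ++ t) = Z.max (Dz p q t) (Sz p q t + Dz p q s)%Z.
Proof.
elim: s => [|x s IH] /=; first by have := @Sz_le_Dz _ p q t; lia.
rewrite IH Sz_cat; lia.
Qed.

Lemma tri_inv n p q (i j k : 'I_n) : (i <= j <= k)%nat ->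
  Dz p q [:: j; k; i] = Dz p q [:: k; j; i] /\ Dz p q [:: k; j; i] = Dz p q [:: k; i; j] /\
  Sz p q [:: j; k; i] = Sz p q [:: k; j; i] /\ Sz p q [:: k; j; i] = Sz p q [:: k; i; j].
Proof.
case/andP=> hij hjk.
have := @fz_mono p q _ _ hij; have := @fz_mono p q _ _ hjk.
have := fz_range p q i; have := fz_range p q j; have := fz_range p q k.
rewrite /=; lia.
Qed.

Lemma ch_inv n (w1 w2 : seq 'I_n) : ch_cong w1 w2 ->
  (forall x, count_mem x w1 = count_mem x w2) /\
  (forall p q, Dz p q w1 = Dz p q w2 /\ Sz p q w1 = Sz p q w2).
Proof.
elim => {w1 w2}.
- move=> p0 q0 i j k h; split.
    by move=> x; rewrite !count_cat /=; lia.
  move=> p q; have [e1 [e2 [e3 e4]]] := @tri_inv _ p q _ _ _ h.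
  by rewrite !Dz_cat !Sz_cat e1 e3.
- move=> p0 q0 i j k h; split.
    by move=> x; rewrite !count_cat /=; lia.
  move=> p q; have [e1 [e2 [e3 e4]]] := @tri_inv _ p q _ _ _ h.
  by rewrite !Dz_cat !Sz_cat e2 e4.
- by [].
- move=> w1 w2 _ [h1 h2]; split => [x|p q]; first by rewrite h1.
  by have [-> ->] := h2 p q.
- move=> w1 w2 w3 _ [h1 h2] _ [h3 h4]; split => [x|p q]; first by rewrite h1 h3.
  by have [-> ->] := h2 p q; have [-> ->] := h4 p q.
Qed.

Lemma stair_all n b (w : seq 'I_n) : stair b w -> all (fun x : 'I_n => x < b)%nat w.
Proof.
elim => {b w} // b u m L a hm _ IH _ hL.
rewrite all_cat; apply/andP; split.
  by apply: sub_all IH => x /= h; apply: ltnW.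
rewrite /rowword all_cat; apply/andP; split.
  elim: L hL => [|e L IHL] //= /andP [he hL].
  by rewrite hm ltnSn ltnS (ltnW he) IHL.
by apply/allP => x /nseqP [-> _]; rewrite hm.
Qed.

Lemma count_lt n (m : 'I_n) s : all (fun e : 'I_n => e < m)%nat s -> count_mem m s = 0%nat.
Proof.
elim: s => [|e s IH] //= /andP [he hs]; rewrite IH //.
by case: eqP he => [->|]; [rewrite ltnn | ].
Qed.

Lemma count_row n (m : 'I_n) L a : all (fun e : 'I_n => e < m)%nat L ->
  count_mem m (rowword m L a) = (size L + a)%nat.
Proof.
move=> hL; rewrite /rowword count_cat count_nseq /= eqxx mul1n; congr (_ + _)%nat.
elim: L hL => [|e L IH] //= /andP [he hL]; rewrite eqxx IH //.
by case: eqP he => [->|]; [rewrite ltnn | move=> _ _; rewrite add0n add1n].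
Qed.

Lemma Dz_pairs n p q (m : 'I_n) L : (q <= m)%nat -> Dz p q (pairs m L) = Sz p q (pairs m L).
Proof.
move=> hq; elim: L => [|e L IH] //=.
have fm : fz p q m = 1%Z by rewrite /fz hq.
have := fz_range p q e; have := @Dz_ge0 _ p q (pairs m L); lia.
Qed.

Lemma Dz_nseq n p q (m : 'I_n) a : (q <= m)%nat -> Dz p q (nseq a m) = Sz p q (nseq a m).
Proof.
move=> hq; elim: a => [|a IH] //=.
have fm : fz p q m = 1%Z by rewrite /fz hq.
have := @Dz_ge0 _ p q (nseq a m); lia.
Qed.

Lemma Dz_row n p q (m : 'I_n) L a : (q <= m)%nat ->
  Dz p q (rowword m L a) = Sz p q (rowword m L a).
Proof.
move=> hq; rewrite /rowword Dz_cat Sz_cat Dz_pairs // Dz_nseq //.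
have := @Dz_ge0 _ p q (pairs m L); rewrite Dz_pairs //; lia.
Qed.

Lemma Dz_zero n p q (w : seq 'I_n) : all (fun x : 'I_n => x < q)%nat w -> Dz p q w = 0%Z.
Proof.
elim: w => [|y w IH] //= /andP [hy hw]; rewrite IH //.
have fy : (fz p q y <= 0)%Z by rewrite /fz leqNgt hy /=; case: ifP => _; lia.
have := @Sz_le_Dz _ p q w; rewrite IH //; lia.
Qed.

Lemma Sz_row n p (m : 'I_n) L a : all (fun e : 'I_n => e < m)%nat L ->
  Sz p m (rowword m L a) =
  (Z.of_nat (size L) + Z.of_nat a - Z.of_nat (count (fun e : 'I_n => e < p)%nat L))%Z.
Proof.
move=> hL; rewrite /rowword Sz_cat.
have -> : Sz p m (nseq a m) = Z.of_nat a.
  elim: a => [|a IH] //=; rewrite IH /fz leqnn; lia.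
have -> : Sz p m (pairs m L) =
    (Z.of_nat (size L) - Z.of_nat (count (fun e : 'I_n => e < p)%nat L))%Z.
  elim: L hL => [|e L IH]; first by move=> _; rewrite /=; lia.
  move=> /andP [he hL]; rewrite pairs_cons Sz_cat IH //.
  have hme : (m <= e)%nat = false by rewrite leqNgt he.
  have e1 : size (e :: L) = (size L).+1 by [].
  have e2 : count (fun e0 : 'I_n => e0 < p)%nat (e :: L) =
    ((e < p)%nat + count (fun e0 : 'I_n => e0 < p)%nat L)%nat by [].
  have e3 : Sz p m [::] = 0%Z by [].
  rewrite e1 e2 !Sz_cons e3 /fz leqnn hme; case: ifP => h; lia.
lia.
Qed.

Lemma count_ltS n (x : 'I_n) s :
  count (fun e : 'I_n => e < x.+1)%nat s = (count_mem x s + count (fun e : 'I_n => e < x)%nat s)%nat.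
Proof.
elim: s => [|e s IH] //=; rewrite IH.
case: (ltngtP e x) => h.
- have h1 : (e == x) = false by apply/eqP => ex; rewrite ex ltnn in h.
  have h2 : (e < x.+1)%nat = true by lia.
  rewrite ?h1 ?h2 /=; lia.
- have h1 : (e == x) = false by apply/eqP => ex; rewrite ex ltnn in h.
  have h2 : (e < x.+1)%nat = false by lia.
  have h3 : (e < x)%nat = false by lia.
  rewrite ?h1 ?h2 ?h3 /=; lia.
- have h1 : (e == x) = true by apply/eqP; apply: val_inj.
  have h2 : (e < x.+1)%nat = true by lia.
  have h3 : (e < x)%nat = false by lia.
  rewrite ?h1 ?h2 ?h3 /=; lia.
Qed.

Lemma geo_trans n : transitive (@geo n).
Proof. by move=> y x z; rewrite /geo => h1 h2; apply: leq_trans h2 h1. Qed.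

Lemma geo_anti n : antisymmetric (@geo n).
Proof. move=> x y; rewrite /geo => /andP [h1 h2]; apply: val_inj; apply/eqP; by rewrite eqn_leq h1 h2. Qed.

Lemma sep n b (w1 w2 : seq 'I_n) : stair b w1 -> stair b w2 ->
  (forall x, count_mem x w1 = count_mem x w2) ->
  (forall p q, Dz p q w1 = Dz p q w2) -> w1 = w2.
Proof.
move=> H1; elim: H1 w2 => {b w1}.
  by move=> w2 H2; inversion H2.
move=> b u1 m1 L1 a1 hm1 su1 IH sL1 hL1 w2 H2.
inversion H2 as [|b' u2 m2 L2 a2 hm2 su2 sL2 hL2 eb ew]; subst b' w2.
have em : m2 = m1 by apply: val_inj; rewrite /= hm1 hm2.
subst m2; subst b.
move=> hc hD.
have hu1 := stair_all su1; have hu2 := stair_all su2.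
have hL1' : all (fun e : 'I_n => e < m1)%nat L1 by [].
have hL2' : all (fun e : 'I_n => e < m1)%nat L2 by [].
have c1 := hc m1.
rewrite [count _ (u1 ++ _)]count_cat [count _ (u2 ++ _)]count_cat in c1.
rewrite !count_row // (count_lt hu1) (count_lt hu2) in c1.
have cp : forall p, count (fun e : 'I_n => e < p)%nat L1 = count (fun e : 'I_n => e < p)%nat L2.
  move=> p; have := hD p m1.
  rewrite [Dz _ _ (u1 ++ _)]Dz_cat [Dz _ _ (u2 ++ _)]Dz_cat !Dz_row // !Sz_row // !(@Dz_zero _ p m1 _ hu1) !(@Dz_zero _ p m1 _ hu2).
  lia.
have cnt1 : count (fun e : 'I_n => e < m1)%nat L1 = size L1 by apply/eqP; rewrite -all_count.
have cnt2 : count (fun e : 'I_n => e < m1)%nat L2 = size L2 by apply/eqP; rewrite -all_count.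
have sL : size L1 = size L2 by rewrite -cnt1 -cnt2 cp.
have ea : a1 = a2 by lia.
have eL : L1 = L2.
  apply: (sorted_eq (@geo_trans n) (@geo_anti n)) => //.
  rewrite /perm_eq; apply/allP => x _ /=; apply/eqP.
  have := cp x.+1; rewrite !count_ltS cp => /eqP; rewrite eqn_add2r => /eqP h; exact: h.
subst a2 L2.
have -> : u1 = u2.
  apply: IH => //.
    move=> x; have := hc x.
    rewrite [count _ (u1 ++ _)]count_cat [count _ (u2 ++ _)]count_cat => /eqP.
    by rewrite eqn_add2r => /eqP h; exact: h.
  move=> p q; case: (leqP q m1) => hq.
    have := hD p q.
    rewrite [Dz _ _ (u1 ++ _)]Dz_cat [Dz _ _ (u2 ++ _)]Dz_cat !Dz_row //.
    have := @Dz_ge0 _ p q u1; have := @Dz_ge0 _ p q u2; lia.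
  have hq1 : all (fun x : 'I_n => x < q)%nat u1 by apply: sub_all hu1 => x /= h; apply: ltn_trans hq.
  have hq2 : all (fun x : 'I_n => x < q)%nat u2 by apply: sub_all hu2 => x /= h; apply: ltn_trans hq.
  by rewrite !Dz_zero.
by [].
Qed.

Lemma Rplus_max_l (r a b : R) : (r + Rmax a b = Rmax (r + a) (r + b))%R.
Proof. unfold Rmax; destruct (Rle_dec a b), (Rle_dec (r + a) (r + b)); lra. Qed.

Lemma tadd_comm x y : tadd x y = tadd y x.
Proof. by case: x => [a|]; case: y => [b|] //=; rewrite Rmax_comm. Qed.

Lemma tadd_assoc x y z : tadd x (tadd y z) = tadd (tadd x y) z.
Proof. by case: x => [a|]; case: y => [b|]; case: z => [c|] //=; rewrite Rmax_assoc. Qed.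

Lemma tmul_assoc x y z : tmul x (tmul y z) = tmul (tmul x y) z.
Proof. by case: x => [a|]; case: y => [b|]; case: z => [c|] //=; rewrite Rplus_assoc. Qed.

Lemma tmul_distr_l x y z : tmul x (tadd y z) = tadd (tmul x y) (tmul x z).
Proof. by case: x => [a|]; case: y => [b|]; case: z => [c|] //=; rewrite Rplus_max_l. Qed.

Lemma tmul_distr_r x y z : tmul (tadd x y) z = tadd (tmul x z) (tmul y z).
Proof.
case: x => [a|]; case: y => [b|]; case: z => [c|] //=.
by rewrite (Rplus_comm (Rmax a b)) Rplus_max_l (Rplus_comm c a) (Rplus_comm c b).
Qed.

Lemma tadd_swap a b c d : tadd (tadd a b) (tadd c d) = tadd (tadd a c) (tadd b d).
Proof. by rewrite -!tadd_assoc (tadd_assoc b) (tadd_comm b c) -tadd_assoc. Qed.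

Lemma mat2_assoc A B C : mat2_mul A (mat2_mul B C) = mat2_mul (mat2_mul A B) C.
Proof.
case: A => a1 a2 a3 a4; case: B => b1 b2 b3 b4; case: C => c1 c2 c3 c4.
rewrite /mat2_mul /=.
rewrite !tmul_distr_l !tmul_distr_r !tmul_assoc.
by congr Mat2; rewrite tadd_swap.
Qed.

Lemma mat2_one_l A : mat2_mul mat2_one A = A.
Proof.
case: A => a1 a2 a3 a4; rewrite /mat2_mul /mat2_one /tone /tzero /=.
by case: a1 => [x|]; case: a2 => [y|]; case: a3 => [z|]; case: a4 => [t|] //=;
  rewrite ?Rplus_0_l.
Qed.

Lemma eval_cons X (rho : X -> mat2) x w : mat2_eval rho (x :: w) = mat2_mul (rho x) (mat2_eval rho w).
Proof. by []. Qed.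

Lemma eval_cat X (rho : X -> mat2) s t :
  mat2_eval rho (s ++ t) = mat2_mul (mat2_eval rho s) (mat2_eval rho t).
Proof.
elim: s => [|x s IH]; first by rewrite mat2_one_l.
by rewrite cat_cons !eval_cons IH mat2_assoc.
Qed.

Lemma eval_flatten X Y (rho : Y -> mat2) (phi : X -> seq Y) u :
  mat2_eval (fun x => mat2_eval rho (phi x)) u = mat2_eval rho (flatten (map phi u)).
Proof.
elim: u => [|x u IH] //=.
by rewrite IH -eval_cat.
Qed.

Lemma eval_U2 X (rho : X -> mat2) w : (forall x, is_U2 (rho x)) -> is_U2 (mat2_eval rho w).
Proof.
move=> H; elim: w => [|x w IH] //=.
rewrite /is_U2 /= in IH *; rewrite IH (H x) /=.
by case: (m22 (rho x)).
Qed.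

Definition rho_cnt n (x : 'I_n) (y : 'I_n) : mat2 :=
  Mat2 (Some (if y == x then 1%R else 0%R)) None None (Some 0%R).

Lemma eval_cnt n (x : 'I_n) w :
  mat2_eval (rho_cnt x) w = Mat2 (Some (INR (count_mem x w))) None None (Some 0%R).
Proof.
elim: w => [|y w IH] //; rewrite eval_cons IH /rho_cnt /mat2_mul /=.
rewrite Rplus_0_l; congr (Mat2 (Some _) _ _ _).
rewrite plus_INR; case: (y == x) => /=; lra.
Qed.

Definition rho_D n p q (y : 'I_n) : mat2 :=
  Mat2 (Some 0%R) (Some (IZR (fz p q y))) None (Some (IZR (fz p q y))).

Definition gD (e : trop) : R := match e with None => 0%R | Some r => Rmax 0 r end.

Lemma Rmax_IZR a b : Rmax (IZR a) (IZR b) = IZR (Z.max a b).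
Proof.
case: (Z.le_ge_cases a b) => h.
  by rewrite Rmax_right ?Z.max_r //; apply: IZR_le.
by rewrite Rmax_left ?Z.max_l //; apply: IZR_le; lia.
Qed.

Lemma eval_D n p q (w : seq 'I_n) : exists e,
  mat2_eval (rho_D p q) w = Mat2 (Some 0%R) e None (Some (IZR (Sz p q w))) /\
  gD e = IZR (Dz p q w).
Proof.
elim: w => [|y w [e [IH he]]]; first by exists None.
rewrite eval_cons IH /rho_D /mat2_mul /=.
case: e IH he => [r|] IH /= he.
- exists (Some (Rmax (0 + r) (IZR (fz p q y) + IZR (Sz p q w))))%R.
  rewrite Rplus_0_l -plus_IZR; split => //=.
  by rewrite ?Rplus_0_l Rmax_assoc he Rmax_IZR.
- exists (Some (IZR (fz p q y) + IZR (Sz p q w)))%R.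
  rewrite Rplus_0_l -plus_IZR; split => //=.
  have h0 : Dz p q w = 0%Z by apply: eq_IZR; rewrite -he.
  by rewrite h0 Rmax_IZR.
Qed.

Delimit Scope nat_scope with N.

Theorem corollaryI (n : nat) (Hn : (0 < n)%N) (X : Type) (u v : seq X) :
  u <> [::] -> v <> [::] ->
  U2T_satisfies u v -> Ch_satisfies n u v.
Proof.
move=> _ _ HU phi.
set W1 := flatten (map phi u); set W2 := flatten (map phi v).
have Hr : forall rho : 'I_n -> mat2, (forall y, is_U2 (rho y)) ->
    mat2_eval rho W1 = mat2_eval rho W2.
  move=> rho Hrho; rewrite /W1 /W2 -!eval_flatten; apply: HU => x; exact: eval_U2.
have Hc : forall x, count_mem x W1 = count_mem x W2.
  move=> x; have := Hr (rho_cnt x) (fun y => erefl).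
  by rewrite !eval_cnt => [[h]]; apply: INR_eq.
have HD : forall p q, Dz p q W1 = Dz p q W2.
  move=> p q; have := Hr (rho_D p q) (fun y => erefl).
  have [e1 [-> h1]] := @eval_D n p q W1; have [e2 [-> h2]] := @eval_D n p q W2.
  case=> he _; apply: eq_IZR; by rewrite -h1 -h2 he.
have hall : forall w : seq 'I_n, all (fun x : 'I_n => x < n)%nat w.
  by move=> w; apply/allP => x _; apply: ltn_ord.
have [S1 [st1 c1]] := @exist_stair n n (leqnn n) W1 (hall W1).
have [S2 [st2 c2]] := @exist_stair n n (leqnn n) W2 (hall W2).
have [i1 j1] := ch_inv c1; have [i2 j2] := ch_inv c2.
have eS : S1 = S2.
  apply: (sep st1 st2).
    by move=> x; rewrite -i1 -i2.
  by move=> p q; have [<- _] := j1 p q; have [<- _] := j2 p q.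
apply: ch_trans c1 _; rewrite eS; exact: ch_sym c2.
Qed.
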